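(* Let $d\ge1$, $t\in\mathbb R$, $\epsilon\ge0$, and let $\Phi=(\phi_0,\dots,\phi_d)\in\mathbb R^{d+1}$ satisfy $\max_{x\in[-1,1]}|P(x,\Phi)-s_t(x)|\le\epsilon$. For an integer $r\ge1$ define the concatenated phase sequence $$\Phi^{(r)}:=\big(\phi_0,\phi_1,\dots,\phi_{d-1},\underbrace{\phi_d+\phi_0,\phi_1,\dots,\phi_{d-1}}_{\text{repeated } r-1\text{ times}},\phi_d\big)\in\mathbb R^{rd+1}.$$ Then $\max_{x\in[-1,1]}|P(x,\Phi^{(r)})-s_{rt}(x)|\le r^2\epsilon$.
   Context: For phases $\Phi=(\phi_0,\dots,\phi_D)\in\mathbb R^{D+1}$ and $x\in[-1,1]$, let $W(x):=\begin{pmatrix}x& i\sqrt{1-x^2}\\ i\sqrt{1-x^2}&x\end{pmatrix}$, $Z=\mathrm{diag}(1,-1)$, $U(x,\Phi):=e^{i\phi_0Z}\prod_{j=1}^D\big[W(x)e^{i\phi_jZ}\big]$, and $P(x,\Phi):=\langle0|U(x,\Phi)|0\rangle$ (the upper-left entry). Also $s_t(x):=e^{-itx^2}$. *)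

(* Defs.v *)
From Stdlib Require Import Reals List.
From Coquelicot Require Import Coquelicot.
Import ListNotations.
Open Scope R_scope.

(* 2x2 complex matrices ((a, b), (c, d)) = [[a, b], [c, d]] *)
Definition Mat2 : Type := ((C * C) * (C * C))%type.

Definition mmul (A B : Mat2) : Mat2 :=
  let '((a11, a12), (a21, a22)) := A in
  let '((b11, b12), (b21, b22)) := B in
  ((Cplus (Cmult a11 b11) (Cmult a12 b21), Cplus (Cmult a11 b12) (Cmult a12 b22)),
   (Cplus (Cmult a21 b11) (Cmult a22 b21), Cplus (Cmult a21 b12) (Cmult a22 b22))).

Definition mid2 : Mat2 := ((RtoC 1, RtoC 0), (RtoC 0, RtoC 1)).

Definition cis (th : R) : C := (cos th, sin th).

Definition Wsig (x : R) : Mat2 :=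
  let s : C := (0, sqrt (1 - x ^ 2)) in ((RtoC x, s), (s, RtoC x)).

Definition expZ (phi : R) : Mat2 := ((cis phi, RtoC 0), (RtoC 0, cis (- phi))).

Fixpoint Wprod (x : R) (l : list R) : Mat2 :=
  match l with
  | [] => mid2
  | phi :: l' => mmul (mmul (Wsig x) (expZ phi)) (Wprod x l')
  end.

Definition Uqsp (x : R) (Phi : list R) : Mat2 :=
  match Phi with
  | [] => mid2
  | phi0 :: rest => mmul (expZ phi0) (Wprod x rest)
  end.

Definition Pqsp (x : R) (Phi : list R) : C := fst (fst (Uqsp x Phi)).

Definition s_t (t x : R) : C := cis (- (t * x ^ 2)).

Definition concat_phases (d r : nat) (Phi : list R) : list R :=
  let phi0 := nth 0 Phi 0 in
  let phid := nth d Phi 0 in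
  let mid := firstn (d - 1) (tl Phi) in
  firstn d Phi ++ concat (repeat ((phid + phi0) :: mid) (r - 1)) ++ [phid].

(* Main.v *)
Require Import Defs.
From Stdlib Require Import Reals List Lra Lia.
From Coquelicot Require Import Coquelicot.
Import ListNotations.
Open Scope R_scope.

Ltac peq := repeat match goal with |- (_,_) = (_,_) => f_equal end.
Ltac dmat M := destruct M as [[[? ?] [? ?]] [[? ?] [? ?]]].
Ltac cunf := unfold mmul, Cminus, Cplus, Cmult, Copp, Cconj, RtoC in *; simpl.

Lemma mmul_assoc A B D : mmul A (mmul B D) = mmul (mmul A B) D.
Proof. dmat A; dmat B; dmat D; cunf; peq; ring. Qed.
Lemma mmul_1l A : mmul mid2 A = A.
Proof. dmat A; unfold mid2; cunf; peq; ring. Qed.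
Lemma mmul_1r A : mmul A mid2 = A.
Proof. dmat A; unfold mid2; cunf; peq; ring. Qed.

Fixpoint mpow (M : Mat2) (k : nat) : Mat2 :=
  match k with O => mid2 | S k' => mmul (mpow M k') M end.

Lemma mpow_l M k : mpow M (S k) = mmul M (mpow M k).
Proof.
  induction k; cbn [mpow]. rewrite mmul_1l, mmul_1r; auto.
  cbn [mpow] in IHk. rewrite IHk at 1. rewrite mmul_assoc; auto.
Qed.

Lemma mpow_XY X Y k : mpow (mmul X Y) (S k) = mmul X (mmul (mpow (mmul Y X) k) Y).
Proof.
  induction k.
  - cbn [mpow]. rewrite !mmul_1l. auto.
  - change (mpow (mmul X Y) (S (S k))) with (mmul (mpow (mmul X Y) (S k)) (mmul X Y)).
    rewrite IHk. cbn [mpow].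
    rewrite <- !mmul_assoc. auto.
Qed.

Lemma Wprod_app x l1 l2 : Wprod x (l1 ++ l2) = mmul (Wprod x l1) (Wprod x l2).
Proof.
  induction l1; cbn [Wprod app]. rewrite mmul_1l; auto.
  rewrite IHl1, mmul_assoc; auto.
Qed.

Lemma Wprod_rep x B k : Wprod x (concat (repeat B k)) = mpow (Wprod x B) k.
Proof.
  induction k; cbn [mpow repeat concat]. auto.
  rewrite Wprod_app, IHk, <- mpow_l. auto.
Qed.

Lemma cis_add a b : cis (a + b) = Cmult (cis a) (cis b).
Proof. unfold cis; cunf; rewrite cos_plus, sin_plus; peq; ring. Qed.

Lemma expZ_add a b : mmul (expZ a) (expZ b) = expZ (a + b).
Proof.
  unfold expZ. fold (RtoC 0).
  replace (- (a + b)) with (-a + - b) by ring.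
  rewrite !cis_add. unfold cis; cunf; peq; ring.
Qed.
Definition su (a c : C) : Mat2 := ((a, c), (Copp (Cconj c), Cconj a)).
Definition norm2 (a : C) : R := fst a ^ 2 + snd a ^ 2.
Definition SU (M : Mat2) := exists a c, M = su a c /\ norm2 a + norm2 c = 1.

Lemma su_mul a c b e :
  mmul (su a c) (su b e) =
  su (Cplus (Cmult a b) (Cmult c (Copp (Cconj e)))) (Cplus (Cmult a e) (Cmult c (Cconj b))).
Proof. destruct a, b, c, e; unfold su; cunf; peq; ring. Qed.

Lemma SU_mul M N : SU M -> SU N -> SU (mmul M N).
Proof.
  intros [a [c [-> Hm]]] [b [e [-> Hn]]]. rewrite su_mul.
  eexists; eexists; split; [reflexivity|].
  revert Hm Hn; destruct a, b, c, e; unfold norm2; cunf. intros Hm Hn.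
  nra.
Qed.

Lemma SU_id : SU mid2.
Proof. exists (RtoC 1), (RtoC 0). split. unfold su, mid2; cunf; peq; ring. unfold norm2; simpl; ring. Qed.

Lemma SU_mpow M k : SU M -> SU (mpow M k).
Proof. intros H; induction k; cbn [mpow]. apply SU_id. apply SU_mul; auto. Qed.

Lemma SU_W x : -1 <= x <= 1 -> SU (Wsig x).
Proof.
  intros Hx. exists (RtoC x), (0, sqrt (1 - x^2)). split.
  unfold su, Wsig; cunf; peq; ring.
  unfold norm2; simpl.
  assert (0 <= 1 - x^2) by nra.
  pose proof (pow2_sqrt _ H). simpl in H0. nra.
Qed.

Lemma SU_E p : SU (expZ p).
Proof.
  exists (cis p), (RtoC 0). split.
  unfold su, expZ, cis; cunf; rewrite cos_neg, sin_neg; peq; ring.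
  unfold norm2, cis; simpl. pose proof (sin2_cos2 p). unfold Rsqr in H. nra.
Qed.

Lemma SU_Wprod x l : -1 <= x <= 1 -> SU (Wprod x l).
Proof.
  intros Hx; induction l; cbn [Wprod]. apply SU_id.
  apply SU_mul; auto. apply SU_mul. apply SU_W; auto. apply SU_E.
Qed.

Lemma SU_U x l : -1 <= x <= 1 -> SU (Uqsp x l).
Proof.
  intros Hx; destruct l; cbn [Uqsp]. apply SU_id. apply SU_mul. apply SU_E. apply SU_Wprod; auto.
Qed.

Lemma Cmod_sq a : Cmod a ^ 2 = norm2 a.
Proof. unfold Cmod, norm2. apply pow2_sqrt. simpl; nra. Qed.

Lemma est U a c (HU : U = su a c) (Hn : norm2 a + norm2 c = 1)
  (s : nat -> C) (s1 : C) (Hs : forall k, s (S k) = Cmult (s k) s1) (Hs0 : s O = RtoC 1)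
  (Hs1 : Cmod s1 = 1) eps (He : Cmod (Cminus a s1) <= eps) :
  forall k, exists ak ck, mpow U k = su ak ck /\ norm2 ak + norm2 ck = 1 /\
     Cmod (Cminus ak (s k)) <= INR k ^ 2 * eps /\ Cmod ck <= INR k * Cmod c.
Proof.
  assert (Hc2 : Cmod c ^ 2 <= 2 * eps).
  { assert (H1 : 1 - Cmod a <= eps).
    { replace s1 with (Cplus a (Copp (Cminus a s1))) in Hs1 by (destruct a, s1; cunf; peq; ring).
      pose proof (Cmod_triangle a (Copp (Cminus a s1))). rewrite Cmod_opp in H. lra. }
    pose proof (Cmod_sq a). pose proof (Cmod_sq c). pose proof (Cmod_ge_0 a).
    assert (Cmod a <= 1) by nra. nra. }
  induction k.
  - exists (RtoC 1), (RtoC 0). rewrite Hs0. cbn [mpow]. split.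
    unfold su, mid2; cunf; peq; ring. split. unfold norm2; simpl; ring.
    simpl. replace (Cminus (RtoC 1) (RtoC 1)) with (RtoC 0) by (cunf; peq; ring).
    replace (Cmod (RtoC 0)) with 0. split; lra.
    unfold Cmod, RtoC; simpl. replace (0*(0*1)+0*(0*1)) with 0 by ring. rewrite sqrt_0; auto.
  - destruct IHk as [ak [ck [Hk [Hn' [He' Hc']]]]].
    exists (Cplus (Cmult ak a) (Cmult ck (Copp (Cconj c)))),
           (Cplus (Cmult ak c) (Cmult ck (Cconj a))).
    cbn [mpow]. rewrite Hk, HU, su_mul. split; [auto|].
    split.
    { revert Hn Hn'. destruct a, c, ak, ck; unfold norm2; cunf. intros Hm Hn'.
      nra. }
    assert (Hak : Cmod ak <= 1).
    { pose proof (Cmod_sq ak). pose proof (Cmod_sq ck). pose proof (Cmod_ge_0 ak).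
      pose proof (Cmod_ge_0 ck). nra. }
    assert (Ha : Cmod a <= 1).
    { pose proof (Cmod_sq a). pose proof (Cmod_sq c). pose proof (Cmod_ge_0 a).
      pose proof (Cmod_ge_0 c). nra. }
    rewrite S_INR. pose proof (pos_INR k). pose proof (Cmod_ge_0 c). pose proof (Cmod_ge_0 ck).
    pose proof (Cmod_ge_0 ak).
    split.
    + rewrite Hs.
      replace (Cminus (Cplus (Cmult ak a) (Cmult ck (Copp (Cconj c)))) (Cmult (s k) s1))
        with (Cplus (Cplus (Cmult ak (Cminus a s1)) (Cmult (Cminus ak (s k)) s1))
                    (Cmult ck (Copp (Cconj c))))
        by (destruct ak, a, s1, ck, c, (s k); cunf; peq; ring).
      eapply Rle_trans. apply Cmod_triangle.
      eapply Rle_trans. apply Rplus_le_compat_r. apply Cmod_triangle.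
      rewrite !Cmod_mult, Cmod_opp, Cmod_conj, Hs1.
      pose proof (Cmod_ge_0 (Cminus a s1)).
      assert (Cmod ak * Cmod (Cminus a s1) <= eps) by nra.
      assert (Cmod ck * Cmod c <= INR k * (2 * eps)) by nra.
      nra.
    + eapply Rle_trans. apply Cmod_triangle.
      rewrite !Cmod_mult, Cmod_conj. nra.
Qed.

Lemma firstn_app_len {A} (m : list A) l : firstn (length m) (m ++ l) = m.
Proof. induction m; simpl; auto. rewrite IHm; auto. Qed.

Lemma nth_app_len (m : list R) z : nth (length m) (m ++ [z]) 0 = z.
Proof. induction m; simpl; auto. Qed.

Lemma Cmod_cis th : Cmod (cis th) = 1.
Proof. unfold Cmod, cis; simpl. pose proof (sin2_cos2 th). unfold Rsqr in H.
  replace (cos th * (cos th * 1) + sin th * (sin th * 1)) with 1 by nra. apply sqrt_1. Qed.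

Lemma concat_U x p0 mid z r :
  Uqsp x (concat_phases (S (length mid)) (S r) (p0 :: mid ++ [z])) =
  mpow (Uqsp x (p0 :: mid ++ [z])) (S r).
Proof.
  unfold concat_phases. cbn [firstn tl nth].
  replace (S (length mid) - 1)%nat with (length mid) by lia.
  rewrite firstn_app_len, nth_app_len. replace (S r - 1)%nat with r by lia.
  cbn [app Uqsp]. rewrite !Wprod_app, Wprod_rep. cbn [Wprod].
  rewrite !mmul_1r.
  set (A := Wprod x mid). set (Y := mmul (Wsig x) (expZ z)).
  rewrite (mmul_assoc (expZ p0) A Y), mpow_XY.
  assert (HB : mmul Y (mmul (expZ p0) A) = mmul (mmul (Wsig x) (expZ (z + p0))) A).
  { unfold Y. rewrite <- expZ_add. rewrite !mmul_assoc. auto. }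
  rewrite HB. apply mmul_assoc.
Qed.

Theorem mainTheorem7 (d : nat) (t eps : R) (Phi : list R) :
  (1 <= d)%nat -> 0 <= eps -> length Phi = S d ->
  (forall x : R, -1 <= x <= 1 -> Cmod (Cminus (Pqsp x Phi) (s_t t x)) <= eps) ->
  forall r : nat, (1 <= r)%nat ->
  forall x : R, -1 <= x <= 1 ->
    Cmod (Cminus (Pqsp x (concat_phases d r Phi)) (s_t (INR r * t) x))
      <= (INR r) ^ 2 * eps.
Proof.
  intros Hd Heps Hlen Happ r Hr x Hx.
  destruct Phi as [|p0 rest]; [discriminate|].
  destruct d as [|n]; [lia|].
  simpl in Hlen. injection Hlen as Hlen.
  assert (Hne : rest <> []) by (intro; subst; discriminate).
  destruct (exists_last Hne) as [mid [z Hmz]]. subst rest.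
  rewrite length_app in Hlen. simpl in Hlen.
  assert (n = length mid) by lia. subst n.
  destruct r as [|r']; [lia|].
  unfold Pqsp. rewrite concat_U.
  destruct (SU_U x (p0 :: mid ++ [z]) Hx) as [a [c [HU Hn]]].
  assert (He : Cmod (Cminus a (s_t t x)) <= eps).
  { specialize (Happ x Hx). unfold Pqsp in Happ. rewrite HU in Happ. exact Happ. }
  destruct (est _ a c HU Hn (fun k => s_t (INR k * t) x) (s_t t x)) with (eps := eps) (k := S r')
    as [ak [ck [Hk [_ [He' _]]]]]; auto.
  - intros k. unfold s_t. rewrite S_INR.
    replace (- ((INR k + 1) * t * x ^ 2)) with (- (INR k * t * x ^ 2) + - (t * x^2)) by ring.
    apply cis_add.
  - unfold s_t, cis; simpl. replace (- (0 * t * (x * (x * 1)))) with 0 by ring.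
    rewrite cos_0, sin_0. reflexivity.
  - apply Cmod_cis.
  - rewrite Hk. exact He'.
Qed.
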